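(* Let $B>0$ and $c>0$, and set $\epsilon^*(B)=\dfrac{c\,e^{-c/2}}{1+B}$. Let $\beta$ be Lipschitz on $[0,1]$ with $\|\beta\|_\infty\le B$, let $k=\mathcal{K}(\beta)$ be the exact backstepping kernel, and let $\hat k\in C^0[0,1]$ satisfy $|k(x)-\hat k(x)|<\epsilon$ for all $x\in[0,1]$, where $\epsilon\in(0,\epsilon^* )$. Put $\tilde k=k-\hat k$ and $\delta(x)=-\tilde k(x)+\int_0^x\beta(x-y)\tilde k(y)\,dy$. Then along solutions $\hat w$ of $$\hat w_t(x,t)=\hat w_x(x,t)+\delta(x)\hat w(0,t),\quad x\in[0,1],\qquad \hat w(1,t)=0,$$ the functional $V(t)=\int_0^1 e^{cx}\hat w^2(x,t)\,dx$ satisfies $V(t)\le V(0)e^{-c^*t}$ for all $t\ge0$, where $$c^* = c-\frac{e^c}{c}\epsilon^2(1+B)^2>0.$$ Moreover, the required accuracy $\epsilon^*$ is maximized over $c>0$ at $c=2$, where $\epsilon^*(B)=\dfrac{2}{e(1+B)}$.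
   Context: The backstepping kernel operator $\mathcal{K}$ maps $\beta\in C^0[0,1]$ to the solution $k$ of $k(x)=-\beta(x)+\int_0^x\beta(x-y)k(y)\,dy$, $x\in[0,1]$. $\|\cdot\|_\infty$ is the supremum norm on $[0,1]$. (The target system arises from the plant $u_t=u_x+\beta(x)u(0,t)$, $u(1,t)=\int_0^1\hat k(1-y)u(y,t)dy$ via $\hat w=u-\int_0^x\hat k(x-y)u(y)dy$.) *)

(* Defs.v *)
From Stdlib Require Import Reals.
From Coquelicot Require Import Coquelicot.
Open Scope R_scope.

Definition sup_le_on01 (f : R -> R) (B : R) : Prop :=
  forall x, 0 <= x <= 1 -> Rabs (f x) <= B.

Definition lipschitz_on01 (f : R -> R) : Prop :=
  exists L, forall x y, 0 <= x <= 1 -> 0 <= y <= 1 ->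
    Rabs (f x - f y) <= L * Rabs (x - y).

(* continuity on [0,1] (functions are total on R) *)
Definition cont_on01 (f : R -> R) : Prop :=
  forall x, continuous f x.

Definition is_bs_kernel (beta k : R -> R) : Prop :=
  cont_on01 k /\
  forall x, 0 <= x <= 1 ->
    k x = - beta x + RInt (fun y => beta (x - y) * k y) 0 x.

Definition delta_fun (beta k khat : R -> R) (x : R) : R :=
  - (k x - khat x) + RInt (fun y => beta (x - y) * (k y - khat y)) 0 x.

Definition eps_star (c B : R) : R := c * exp (- c / 2) / (1 + B).

Definition c_star (c B eps : R) : R := c - exp c / c * eps ^ 2 * (1 + B) ^ 2.

Definition C1_2d (w : R -> R -> R) : Prop :=
  (forall x t, ex_derive (fun y => w y t) x) /\
  (forall x t, ex_derive (fun s => w x s) t) /\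
  (forall x t, continuity_2d_pt w x t) /\
  (forall x t, continuity_2d_pt (fun x' t' => Derive (fun y => w y t') x') x t) /\
  (forall x t, continuity_2d_pt (fun x' t' => Derive (fun s => w x' s) t') x t).

Definition is_target_solution (delta : R -> R) (w : R -> R -> R) : Prop :=
  C1_2d w /\
  (forall x t, 0 <= x <= 1 -> 0 <= t ->
     Derive (fun s => w x s) t = Derive (fun y => w y t) x + delta x * w 0 t) /\
  (forall t, 0 <= t -> w 1 t = 0).

Definition Vfun (c : R) (w : R -> R -> R) (t : R) : R :=
  RInt (fun x => exp (c * x) * (w x t) ^ 2) 0 1.

(* Main.v *)
Require Import Defs.
From Stdlib Require Import Reals Lra Psatz.
From Coquelicot Require Import Coquelicot.
Open Scope R_scope.
Lemma cont2d_x f x t : continuity_2d_pt f x t -> continuous (fun y => f y t) x.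
Proof.
  intros H. apply filterlim_locally. intros eps.
  destruct (H eps) as [d Hd].
  exists d. intros y Hy. apply Hd.
  - exact Hy.
  - rewrite Rminus_eq_0, Rabs_R0. apply cond_pos.
Qed.

Lemma cont2d_swap f x t : continuity_2d_pt f x t -> continuity_2d_pt (fun u v => f v u) t x.
Proof.
  intros H eps. destruct (H eps) as [d Hd]. exists d. intros u v Hu Hv. now apply Hd.
Qed.

Lemma lip_cont f L z : (forall a b, Rabs (f a - f b) <= L * Rabs (a - b)) -> continuous f z.
Proof.
  intros H. apply filterlim_locally. intros eps.
  assert (HL : 0 < Rabs L + 1) by (pose proof (Rabs_pos L); lra).
  assert (Hd : 0 < eps / (Rabs L + 1)) by (apply Rdiv_lt_0_compat; [apply cond_pos|lra]).
  exists (mkposreal _ Hd). intros y Hy.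
  change (Rabs (f y - f z) < eps).
  change (Rabs (y - z) < eps / (Rabs L + 1)) in Hy.
  pose proof (H y z). pose proof (Rabs_pos (y - z)).
  assert (L * Rabs (y - z) <= Rabs L * Rabs (y - z)).
  { apply Rmult_le_compat_r; [lra| apply Rle_abs]. }
  assert ((Rabs L + 1) * Rabs (y - z) < eps).
  { apply (Rmult_lt_compat_l (Rabs L + 1)) in Hy; [|lra].
    replace ((Rabs L + 1) * (eps / (Rabs L + 1))) with (pos eps) in Hy by (field; lra). lra. }
  nra.
Qed.

Lemma exp_bound c : 0 < c -> c * exp (- c / 2) <= 2 * exp (-1).
Proof.
  intros Hc. pose proof (exp_ineq1_le (c/2 - 1)).
  assert (exp (c/2 - 1) = exp (c/2) * exp (-1)) by (rewrite <- exp_plus; f_equal; lra).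
  assert (exp (- c / 2) * exp (c/2) = 1) by (rewrite <- exp_plus, <- exp_0; f_equal; lra).
  pose proof (exp_pos (-c/2)). pose proof (exp_pos (-1)). nra.
Qed.
Lemma cmul (f g : R -> R) x : continuous f x -> continuous g x -> continuous (fun y => f y * g y) x.
Proof. exact (@continuous_mult R_UniformSpace R_AbsRing f g x). Qed.
Lemma cplus (f g : R -> R) x : continuous f x -> continuous g x -> continuous (fun y => f y + g y) x.
Proof. exact (@continuous_plus R_UniformSpace R_AbsRing R_NormedModule f g x). Qed.
Lemma copp (f : R -> R) x : continuous f x -> continuous (fun y => - f y) x.
Proof. exact (@continuous_opp R_UniformSpace R_AbsRing R_NormedModule f x). Qed.
Lemma cminus (f g : R -> R) x : continuous f x -> continuous g x -> continuous (fun y => f y - g y) x.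
Proof. intros. apply cplus; auto. apply copp; auto. Qed.
Lemma ccomp (f g : R -> R) x : continuous f x -> continuous g (f x) -> continuous (fun y => g (f y)) x.
Proof. exact (@continuous_comp R_UniformSpace R_UniformSpace R_UniformSpace f g x). Qed.
Lemma cconst (a : R) x : continuous (fun _ : R => a) x.
Proof. exact (@continuous_const R_UniformSpace R_UniformSpace a x). Qed.
Lemma cder (f : R -> R) x : ex_derive f x -> continuous f x.
Proof. exact (@ex_derive_continuous R_AbsRing R_NormedModule f x). Qed.
Lemma exRc (f : R -> R) a b : (forall z, Rmin a b <= z <= Rmax a b -> continuous f z) -> ex_RInt f a b.
Proof. exact (@ex_RInt_continuous R_CompleteNormedModule f a b). Qed.

Definition clamp (z : R) := Rmax 0 (Rmin 1 z).
Lemma clamp_lip a b : Rabs (clamp a - clamp b) <= Rabs (a - b).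
Proof. unfold clamp, Rmax, Rmin. repeat destruct Rle_dec; unfold Rabs; repeat destruct Rcase_abs; lra. Qed.
Lemma clamp_id z : 0 <= z <= 1 -> clamp z = z.
Proof. intros. unfold clamp, Rmax, Rmin. repeat destruct Rle_dec; lra. Qed.

Lemma delta_bound (B eps : R) beta k khat x :
  lipschitz_on01 beta -> sup_le_on01 beta B -> is_bs_kernel beta k -> cont_on01 khat ->
  (forall x, 0 <= x <= 1 -> Rabs (k x - khat x) < eps) -> 0 <= x <= 1 ->
  Rabs (delta_fun beta k khat x) <= eps * (1 + B).
Proof.
  intros [L HL] Hs [Hk _] Hkh He Hx.
  assert (HB : 0 <= B) by (pose proof (Hs 0 ltac:(lra)); pose proof (Rabs_pos (beta 0)); lra).
  assert (Hcb : forall z, continuous (fun y => beta (clamp y)) z).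
  { intro z. apply lip_cont with (Rabs L). intros a b.
    assert (Ha : 0 <= clamp a <= 1) by (unfold clamp, Rmax, Rmin; repeat destruct Rle_dec; lra).
    assert (Hb : 0 <= clamp b <= 1) by (unfold clamp, Rmax, Rmin; repeat destruct Rle_dec; lra).
    pose proof (HL _ _ Ha Hb). pose proof (clamp_lip a b).
    pose proof (Rabs_pos (clamp a - clamp b)). pose proof (Rle_abs L). pose proof (Rabs_pos L).
    nra. }
  set (f := fun y => beta (x - y) * (k y - khat y)).
  assert (Hex : ex_RInt f 0 x).
  { apply ex_RInt_ext with (fun y => beta (clamp (x - y)) * (k y - khat y)).
    { rewrite Rmin_left, Rmax_right by lra. intros y Hy. unfold f. rewrite clamp_id; lra. }
    apply exRc. intros z _. apply cmul.
    - apply ccomp with (f := fun y => x - y) (g := fun u => beta (clamp u)).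
      + apply cder. auto_derive. auto.
      + apply Hcb.
    - apply cminus; [apply Hk | apply Hkh]. }
  assert (Hpt : forall y, 0 < y < x -> Rabs (f y) <= B * eps).
  { intros y Hy. unfold f. rewrite Rabs_mult.
    pose proof (Hs (x - y) ltac:(lra)). pose proof (He y ltac:(lra)).
    apply Rmult_le_compat; try apply Rabs_pos; lra. }
  assert (Hup : RInt f 0 x <= RInt (fun _ => B * eps) 0 x).
  { apply RInt_le; auto; [lra| apply ex_RInt_const |].
    intros y Hy. pose proof (Hpt y Hy). pose proof (Rle_abs (f y)). lra. }
  assert (Hlo : RInt (fun _ => - (B * eps)) 0 x <= RInt f 0 x).
  { apply RInt_le; auto; [lra| apply ex_RInt_const |].
    intros y Hy. pose proof (Hpt y Hy). pose proof (Rle_abs (- f y)). rewrite Rabs_Ropp in H0. lra. }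
  rewrite RInt_const in Hup, Hlo. unfold scal in Hup, Hlo; simpl in Hup, Hlo.
  unfold mult in Hup, Hlo; simpl in Hup, Hlo.
  assert (HI : Rabs (RInt f 0 x) <= B * eps).
  { assert (0 <= B * eps) by (pose proof (He 0 ltac:(lra)); pose proof (Rabs_pos (k 0 - khat 0)); nra).
    apply Rabs_le. split; nra. }
  unfold delta_fun. fold f.
  eapply Rle_trans; [apply Rabs_triang|]. rewrite Rabs_Ropp.
  pose proof (He x Hx). lra.
Qed.
Lemma Dt c (w : R -> R -> R) x t : ex_derive (fun s => w x s) t ->
  Derive (fun u => exp (c * x) * (w x u) ^ 2) t = exp (c*x) * (2 * w x t * Derive (fun s => w x s) t).
Proof.
  intros H. apply is_derive_unique. auto_derive. exact H. ring.
Qed.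

Lemma Dx c (w : R -> R -> R) x t : ex_derive (fun y => w y t) x ->
  is_derive (fun y => exp (c * y) * (w y t) ^ 2) x (c * exp (c*x) * (w x t)^2 + exp (c*x) * (2 * w x t * Derive (fun y => w y t) x)).
Proof.
  intros H. auto_derive. exact H. ring.
Qed.

Lemma V_deriv c w t : C1_2d w ->
  is_derive (Vfun c w) t (RInt (fun x => exp (c*x) * (2 * w x t * Derive (fun s => w x s) t)) 0 1).
Proof.
  intros [Hx [Ht [Hc [Hcx Hct]]]].
  unfold Vfun.
  assert (E: RInt (fun x => exp (c*x) * (2 * w x t * Derive (fun s => w x s) t)) 0 1
     = RInt (fun x => Derive (fun u => (fun s x => exp (c * x) * (w x s) ^ 2) u x) t) 0 1).
  { apply RInt_ext. intros x _. symmetry. apply Dt; auto. }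
  rewrite E.
  apply (is_derive_RInt_param (fun s x => exp (c * x) * (w x s) ^ 2)).
  - apply filter_forall. intros u x _. auto_derive. apply Ht.
  - intros x _.
    apply continuity_2d_pt_ext with (fun u v => exp (c * v) * (2 * w v u * Derive (fun s => w v s) u)).
    { intros u v. symmetry. apply Dt; auto. }
    apply continuity_2d_pt_mult.
    + apply continuity_1d_2d_pt_comp with (g := fun u v => c * v).
      * apply continuity_pt_filterlim. apply continuous_exp.
      * apply continuity_2d_pt_mult; [apply continuity_2d_pt_const|apply continuity_2d_pt_id2].
    + apply continuity_2d_pt_mult.
      * apply continuity_2d_pt_mult; [apply continuity_2d_pt_const|].
        apply (cont2d_swap w x t). apply Hc.
      * apply (cont2d_swap (fun x' t' => Derive (fun s => w x' s) t') x t). apply Hct.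
  - apply filter_forall. intros u. apply (@ex_RInt_continuous R_CompleteNormedModule). intros z _.
    apply (@ex_derive_continuous R_AbsRing R_NormedModule). auto_derive. apply Hx.
Qed.

Lemma main_ineq c B eps beta k khat w t : 0 < c ->
  lipschitz_on01 beta -> sup_le_on01 beta B -> is_bs_kernel beta k -> cont_on01 khat ->
  (forall x, 0 <= x <= 1 -> Rabs (k x - khat x) < eps) ->
  is_target_solution (delta_fun beta k khat) w -> 0 <= t ->
  RInt (fun x => exp (c*x) * (2 * w x t * Derive (fun s => w x s) t)) 0 1
    <= - c_star c B eps * Vfun c w t.
Proof.
  intros Hc Hl Hs Hk Hkh He [[Hx [Ht [Hc2 [Hcx Hct]]]] [Hpde Hbd]] Ht0.
  set (D := eps * (1 + B)).
  assert (Hd : forall x, 0 <= x <= 1 -> Rabs (delta_fun beta k khat x) <= D).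
  { intros x Hx'. apply delta_bound; auto. }
  assert (Hec : 1 < exp c) by (pose proof (exp_ineq1_le c); lra).
  set (q := c / (exp c - 1)).
  assert (Hq : 0 < q) by (unfold q; apply Rdiv_lt_0_compat; lra).
  set (M := D ^ 2 / q).
  assert (cE : forall z, continuous (fun y => exp (c * y)) z).
  { intro z. apply cder. auto_derive. auto. }
  assert (cW : forall z, continuous (fun y => w y t) z) by (intro z; apply cder, Hx).
  assert (cWx : forall z, continuous (fun y => Derive (fun u => w u t) y) z)
    by (intro z; apply (cont2d_x (fun x' t' => Derive (fun u => w u t') x')), Hcx).
  assert (cWt : forall z, continuous (fun y => Derive (fun s => w y s) t) z)
    by (intro z; apply (cont2d_x (fun x' t' => Derive (fun s => w x' s) t')), Hct).
  assert (HA : is_RInt (fun x => c * exp (c*x) * (w x t)^2 + exp (c*x) * (2 * w x t * Derive (fun y => w y t) x)) 0 1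
      (- (w 0 t) ^ 2)).
  { assert (Eq : minus (exp (c * 1) * (w 1 t) ^ 2) (exp (c * 0) * (w 0 t) ^ 2) = - (w 0 t)^2).
    { unfold minus, plus, opp; simpl. rewrite Hbd by lra. rewrite Rmult_0_r, exp_0. ring. }
    rewrite <- Eq.
    apply (@is_RInt_derive R_CompleteNormedModule (fun y => exp (c * y) * (w y t) ^ 2)).
    - intros x _. apply Dx. apply Hx.
    - intros x _. apply cplus.
      + apply cmul; [apply cmul; [apply cconst| apply cE]|].
        apply cmul; [apply cW|]. apply cmul; [apply cW|apply cconst].
      + apply cmul; [apply cE|]. apply cmul; [apply cmul; [apply cconst|apply cW]|apply cWx]. }
  assert (HexV : ex_RInt (fun x => exp (c*x) * (w x t)^2) 0 1).
  { apply exRc. intros z _. apply cmul; [apply cE|]. apply cmul; [apply cW|]. apply cmul; [apply cW| apply cconst]. }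
  assert (HV : is_RInt (fun x => exp (c*x) * (w x t)^2) 0 1 (Vfun c w t)) by (unfold Vfun; apply (@RInt_correct R_CompleteNormedModule); exact HexV).
  assert (HV0 : 0 <= Vfun c w t).
  { apply RInt_ge_0; auto; [lra|]. intros x _. pose proof (exp_pos (c*x)). nra. }
  assert (Ha : is_RInt (fun x => q * exp (c*x)) 0 1 1).
  { assert (Eq : minus (exp (c * 1) / (exp c - 1)) (exp (c * 0) / (exp c - 1)) = 1).
    { unfold minus, plus, opp; simpl. rewrite Rmult_0_r, exp_0, Rmult_1_r. field. lra. }
    rewrite <- Eq at 2.
    apply (@is_RInt_derive R_CompleteNormedModule (fun y => exp (c * y) / (exp c - 1))).
    - intros x _. auto_derive. auto. unfold q. field. lra.
    - intros x _. apply cmul; [apply cconst| apply cE]. }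
  pose proof (is_RInt_plus _ _ _ _ _ _ HA (is_RInt_plus _ _ _ _ _ _ (is_RInt_scal _ _ _ (M - c) _ HV) (is_RInt_scal _ _ _ ((w 0 t)^2) _ Ha))) as HH.
  apply (@is_RInt_unique R_CompleteNormedModule) in HH.
  eapply Rle_trans.
  - apply RInt_le; [lra | | | ].
    + apply exRc. intros z _. apply cmul; [apply cE|]. apply cmul; [apply cmul; [apply cconst|apply cW]|apply cWt].
    + eexists. apply (is_RInt_plus _ _ _ _ _ _ HA (is_RInt_plus _ _ _ _ _ _ (is_RInt_scal _ _ _ (M - c) _ HV) (is_RInt_scal _ _ _ ((w 0 t)^2) _ Ha))).
    + intros x Hx'. unfold plus, scal; simpl. unfold mult; simpl.
      rewrite Hpde by lra.
      pose proof (Hd x ltac:(lra)) as Hdx.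
      set (dd := delta_fun beta k khat x) in *.
      set (W := w x t). set (W0 := w 0 t). set (Wx := Derive (fun y => w y t) x).
      set (E := exp (c * x)). assert (HE : 0 < E) by apply exp_pos.
      assert (Hdd : dd ^ 2 <= D ^ 2).
      { pose proof (Rabs_pos dd). rewrite <- (pow2_abs dd). apply pow_incr; lra. }
      assert (HMq : M * q = D ^ 2) by (unfold M; field; lra).
      assert (Hkey : 2 * W * dd * W0 <= M * W ^ 2 + q * W0 ^ 2).
      { assert (0 <= (dd * W - q * W0) ^ 2) by apply pow2_ge_0.
        assert (q * (2 * W * dd * W0) <= q * (M * W ^ 2 + q * W0 ^ 2)) by nra.
        apply Rmult_le_reg_l with q; auto. }
      assert (E * (2 * W * dd * W0) <= E * (M * W ^ 2 + q * W0 ^ 2)) by (apply Rmult_le_compat_l; lra).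
      nra.
  - rewrite HH. unfold plus, scal; simpl. unfold mult; simpl.
    assert (HM : M <= exp c / c * eps ^ 2 * (1 + B) ^ 2).
    { unfold M, q, D. replace ((eps * (1 + B)) ^ 2 / (c / (exp c - 1))) with ((exp c - 1) / c * eps ^ 2 * (1 + B) ^ 2) by (field; lra).
      apply Rmult_le_compat_r; [apply pow2_ge_0|]. apply Rmult_le_compat_r; [apply pow2_ge_0|].
      unfold Rdiv. apply Rmult_le_compat_r; [apply Rlt_le, Rinv_0_lt_compat; lra| lra]. }
    unfold c_star. nra.
Qed.

Theorem lemma2 :
  forall B : R, 0 < B ->
  (forall c : R, 0 < c ->
    forall (beta k khat : R -> R) (eps : R) (w : R -> R -> R),
      lipschitz_on01 beta ->
      sup_le_on01 beta B ->
      is_bs_kernel beta k ->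
      cont_on01 khat ->
      (forall x, 0 <= x <= 1 -> Rabs (k x - khat x) < eps) ->
      0 < eps -> eps < eps_star c B ->
      is_target_solution (delta_fun beta k khat) w ->
      0 < c_star c B eps /\
      forall t, 0 <= t -> Vfun c w t <= Vfun c w 0 * exp (- c_star c B eps * t))
  /\ (forall c : R, 0 < c -> eps_star c B <= eps_star 2 B)
  /\ eps_star 2 B = 2 / (exp 1 * (1 + B)).
Proof.
  intros B HB. split; [|split].
  - intros c Hc beta k khat eps w Hl Hs Hk Hkh He Heps Heps2 Hsol. split.
    + unfold eps_star in Heps2. unfold c_star.
      set (Y := c * exp (- c / 2)) in *.
      assert (HX : eps * (1 + B) < Y).
      { apply Rmult_lt_compat_r with (r := 1 + B) in Heps2; [|lra].
        replace (Y / (1 + B) * (1 + B)) with Y in Heps2 by (field; lra). lra. }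
      assert (HY2 : Y ^ 2 = c ^ 2 * exp (- c)).
      { unfold Y. replace (exp (- c)) with (exp (- c / 2) * exp (- c / 2)) by (rewrite <- exp_plus; f_equal; lra). ring. }
      assert (Hsq : (eps * (1 + B)) ^ 2 < Y ^ 2).
      { assert (0 < eps * (1 + B)) by (apply Rmult_lt_0_compat; lra). nra. }
      assert (Hee : exp c * exp (- c) = 1) by (rewrite <- exp_plus, Rplus_opp_r; apply exp_0).
      assert (exp c / c * (eps * (1 + B)) ^ 2 < exp c / c * Y ^ 2).
      { apply Rmult_lt_compat_l; [|exact Hsq]. apply Rdiv_lt_0_compat; [apply exp_pos|lra]. }
      replace (exp c / c * Y ^ 2) with c in H.
      2:{ rewrite HY2. replace (exp c / c * (c ^ 2 * exp (- c))) with (c * (exp c * exp (- c))) by (field; lra). rewrite Hee. ring. }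
      replace (exp c / c * eps ^ 2 * (1 + B) ^ 2) with (exp c / c * (eps * (1 + B)) ^ 2) by ring. lra.
    + set (cs := c_star c B eps).
      intros t Ht0.
      destruct Hsol as [HC1 HP].
      set (g := fun s => Vfun c w s * exp (cs * s)).
      set (Vd := fun s => RInt (fun x => exp (c*x) * (2 * w x s * Derive (fun u => w x u) s)) 0 1).
      assert (Hg : forall s, is_derive g s (Vd s * exp (cs * s) + Vfun c w s * (cs * exp (cs * s)))).
      { intro s. unfold g.
        apply (is_derive_mult (fun s => Vfun c w s) (fun s => exp (cs * s))).
        - apply V_deriv. exact HC1.
        - auto_derive; auto. ring.
        - intros; apply Rmult_comm. }
      assert (Hm : exists xi, Rmin 0 t <= xi <= Rmax 0 t /\ g t - g 0 = (Vd xi * exp (cs * xi) + Vfun c w xi * (cs * exp (cs * xi))) * (t - 0)).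
      { apply (MVT_gen g 0 t (fun s => Vd s * exp (cs * s) + Vfun c w s * (cs * exp (cs * s)))).
        - intros; apply Hg.
        - intros x _. apply continuity_pt_filterlim. apply cder. eexists. apply Hg. }
      rewrite Rmin_left, Rmax_right in Hm by lra.
      destruct Hm as [xi [Hxi Heq]].
      assert (Hle : Vd xi <= - cs * Vfun c w xi).
      { unfold Vd, cs. apply (main_ineq c B eps beta k khat w xi); auto. split; auto. lra. }
      pose proof (exp_pos (cs * xi)).
      assert (Hgt : g t <= g 0).
      { assert ((Vd xi * exp (cs * xi) + Vfun c w xi * (cs * exp (cs * xi))) <= 0) by nra. nra. }
      unfold g in Hgt. rewrite Rmult_0_r, exp_0, Rmult_1_r in Hgt.
      assert (Hx : exp (cs * t) * exp (- cs * t) = 1) by (rewrite <- exp_plus, <- exp_0; f_equal; ring).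
      pose proof (exp_pos (- cs * t)).
      apply Rmult_le_compat_r with (r := exp (- cs * t)) in Hgt; [|lra].
      replace (Vfun c w t * exp (cs * t) * exp (- cs * t)) with (Vfun c w t) in Hgt by (rewrite Rmult_assoc, Hx; ring).
      exact Hgt.
  - intros c Hc. unfold eps_star.
    pose proof (exp_bound c Hc). replace (-1) with (Ropp 2 / 2) in H by field. apply Rmult_le_compat_r; [|exact H].
    apply Rlt_le, Rinv_0_lt_compat; lra.
  - unfold eps_star. replace (Ropp 2 / 2) with (- (1)) by field. rewrite exp_Ropp. field.
    split; [lra|]. pose proof (exp_pos 1); lra.
Qed.
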